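(* Let $A:[1,\infty)\to\mathbb R^{d\times d}$ be continuous with evolution family $T(t,s)$ for $x'=A(t)x$, and let $\mathcal S=\{\|\cdot\|_t;\ t\ge1\}$ be a family of norms on $\mathbb R^d$. Assume there exist $K,a>0$ with $\|T(t,s)x\|_t\le K(t/s)^a\|x\|_s$ and $\|T(s,t)x\|_s\le K(t/s)^a\|x\|_t$ for all $t\ge s\ge1$ and $x\in\mathbb R^d$. Then the following are equivalent: (a) $x'=A(t)x$ admits a strong polynomial dichotomy with respect to $\mathcal S$; (b) the sequence $(A_n)_{n\in\mathbb N}$, $A_n=T(n+1,n)$, admits a strong polynomial dichotomy with respect to the sequence of norms $\{\|\cdot\|_n;\ n\in\mathbb N\}$.
   Context: $\mathbb N=\{1,2,\dots\}$. Strong polynomial dichotomy of $x'=A(t)x$ w.r.t. $\{\|\cdot\|_t\}$: there exist $K>0$, $a\ge\lambda>0$ and projections $P(t)$ with $P(t)T(t,s)=T(t,s)P(s)$ for $t\ge s\ge1$ and, for $t\ge s\ge1$, $x$, $Q(t)=\mathrm{Id}-P(t)$: $\|T(t,s)P(s)x\|_t\le K(t/s)^{-\lambda}\|x\|_s$, $\|T(s,t)Q(t)x\|_s\le K(t/s)^{-\lambda}\|x\|_t$, $\|T(t,s)x\|_t\le K(t/s)^a\|x\|_s$, $\|T(s,t)x\|_s\le K(t/s)^a\|x\|_t$. For a sequence $(A_n)_{n\in\mathbb N}$: $\mathcal A(m,n)=A_{m-1}\cdots A_n$ ($m>n$), $\mathrm{Id}$ ($m=n$), $A_m^{-1}\cdots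 A_{n-1}^{-1}$ ($m<n$). Strong polynomial dichotomy w.r.t. $\{\|\cdot\|_n\}$: there exist $K>0$, $a\ge\lambda>0$ and projections $P_n$ with $A_nP_n=P_{n+1}A_n$ and, for $m\ge n$, $x$: $\|\mathcal A(m,n)P_nx\|_m\le K(m/n)^{-\lambda}\|x\|_n$, $\|\mathcal A(n,m)Q_mx\|_n\le K(m/n)^{-\lambda}\|x\|_m$, $\|\mathcal A(m,n)x\|_m\le K(m/n)^a\|x\|_n$, $\|\mathcal A(n,m)x\|_n\le K(m/n)^a\|x\|_m$. *)

(* Defs.v *)
From HB Require Import structures.
From mathcomp Require Import all_boot all_order all_algebra.
From mathcomp Require Import all_classical all_reals all_analysis.
Set Implicit Arguments. Unset Strict Implicit. Unset Printing Implicit Defensive.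
Import Order.TTheory GRing.Theory Num.Theory.
Import numFieldNormedType.Exports.
Local Open Scope classical_set_scope.
Local Open Scope ring_scope.

Section Defs.
Variables (R : realType) (d : nat).
Notation mat := 'M[R]_d.
Notation vec := 'cV[R]_d.

Definition is_norm (N : vec -> R) : Prop :=
  [/\ forall x, 0 <= N x,
      forall x, N x = 0 -> x = 0,
      forall (c : R) x, N (c *: x) = `|c| * N x &
      forall x y, N (x + y) <= N x + N y].

Definition norm_family (N : R -> vec -> R) : Prop :=
  forall t, 1 <= t -> is_norm (N t).

Definition evolution_family (A : R -> mat) (T : R -> R -> mat) : Prop :=
  [/\ forall t, 1 <= t -> T t t = 1%:M,
      forall t s r : R, 1 <= t -> 1 <= s -> 1 <= r -> T t s *m T s r = T t r,
      forall s, 1 <= s -> {within `[1, +oo[, continuous (fun u : R => T u s)} &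
      forall s t : R, 1 <= s -> 1 < t -> is_derive t (1 : R) (fun u : R => T u s) (A t *m T t s)].

Definition is_proj (P : mat) : Prop := P *m P = P.

Definition cont_strong_poly_dichotomy (T : R -> R -> mat) (N : R -> vec -> R) : Prop :=
  exists (K a lam : R) (P : R -> mat),
    [/\ [/\ 0 < K, 0 < lam & lam <= a],
        forall t, 1 <= t -> is_proj (P t),
        forall t s, 1 <= s -> s <= t -> P t *m T t s = T t s *m P s &
        forall t s (x : vec), 1 <= s -> s <= t ->
          [/\ N t (T t s *m (P s *m x)) <= K * (t / s) `^ (- lam) * N s x,
              N s (T s t *m ((1%:M - P t) *m x)) <= K * (t / s) `^ (- lam) * N t x,
              N t (T t s *m x) <= K * (t / s) `^ a * N s x &
              N s (T s t *m x) <= K * (t / s) `^ a * N t x]].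

Fixpoint fwd (As : nat -> mat) (n k : nat) : mat :=
  match k with 0 => 1%:M | k'.+1 => As (n + k')%N *m fwd As n k' end.
Fixpoint bwd (As : nat -> mat) (m k : nat) : mat :=
  match k with 0 => 1%:M | k'.+1 => bwd As m k' *m invmx (As (m + k')%N) end.

Definition cocycle (As : nat -> mat) (m n : nat) : mat :=
  if (n <= m)%N then fwd As n (m - n) else bwd As m (n - m).

Definition disc_strong_poly_dichotomy (As : nat -> mat) (Nn : nat -> vec -> R) : Prop :=
  exists (K a lam : R) (P : nat -> mat),
    [/\ [/\ 0 < K, 0 < lam & lam <= a],
        forall n, (1 <= n)%N -> is_proj (P n),
        forall n, (1 <= n)%N -> As n *m P n = P n.+1 *m As n &
        forall m n (x : vec), (1 <= n)%N -> (n <= m)%N ->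
          [/\ Nn m (cocycle As m n *m (P n *m x))
                <= K * (m%:R / n%:R) `^ (- lam) * Nn n x,
              Nn n (cocycle As n m *m ((1%:M - P m) *m x))
                <= K * (m%:R / n%:R) `^ (- lam) * Nn m x,
              Nn m (cocycle As m n *m x) <= K * (m%:R / n%:R) `^ a * Nn n x &
              Nn n (cocycle As n m *m x) <= K * (m%:R / n%:R) `^ a * Nn m x]].
End Defs.

(* Main.v *)
Require Import Defs.
From HB Require Import structures.
From mathcomp Require Import all_boot all_order all_algebra.
From mathcomp Require Import all_classical all_reals all_analysis.
From mathcomp Require Import zify ring lra.
Import Order.TTheory GRing.Theory Num.Theory.
Import numFieldNormedType.Exports.
Local Open Scope classical_set_scope.
Local Open Scope ring_scope.
Set Implicit Arguments. Unset Strict Implicit.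
Import Num.Def.

Definition evo_alg (R : realType) d (T : R -> R -> 'M[R]_d) :=
  (forall t, 1 <= t -> T t t = 1%:M) /\
  (forall t s r : R, 1 <= t -> 1 <= s -> 1 <= r -> T t s *m T s r = T t r).

Lemma nat1 (R : realType) (n : nat) : (1 <= n)%N -> 1 <= (n%:R : R).
Proof. by move=> h; rewrite ler1n. Qed.

Lemma fwdT (R : realType) d (T : R -> R -> 'M[R]_d) : evo_alg T ->
  forall n k, (1 <= n)%N -> fwd (fun j : nat => T j.+1%:R j%:R) n k = T (n+k)%:R n%:R.
Proof.
move=> [Tid Tc] n k n1; elim: k => [|k IH] /=.
  by rewrite addn0 Tid // nat1.
rewrite IH Tc ?addnS // nat1 //; lia.
Qed.

Lemma invT (R : realType) d (T : R -> R -> 'M[R]_d) : evo_alg T ->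
  forall j, (1 <= j)%N -> invmx (T j.+1%:R j%:R) = T j%:R j.+1%:R.
Proof.
move=> [Tid Tc] j j1.
have h1 : T j.+1%:R j%:R *m T j%:R j.+1%:R = 1%:M by rewrite Tc ?Tid ?nat1.
have h2 : T j%:R j.+1%:R *m T j.+1%:R j%:R = 1%:M by rewrite Tc ?Tid ?nat1.
have [u _] := mulmx1_unit h1.
by rewrite -[invmx _]mulmx1 -h1 mulKmx.
Qed.

Lemma bwdT (R : realType) d (T : R -> R -> 'M[R]_d) : evo_alg T ->
  forall m k, (1 <= m)%N -> bwd (fun j : nat => T j.+1%:R j%:R) m k = T m%:R (m+k)%:R.
Proof.
move=> hT m k m1; have [Tid Tc] := hT; elim: k => [|k IH] /=.
  by rewrite addn0 Tid // nat1.
rewrite IH invT; last by lia.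
rewrite Tc ?addnS //.
all: try (apply: nat1; lia). done.
Qed.

Lemma cocT (R : realType) d (T : R -> R -> 'M[R]_d) : evo_alg T ->
  forall m n, (1 <= m)%N -> (1 <= n)%N ->
  cocycle (fun j : nat => T j.+1%:R j%:R) m n = T m%:R n%:R.
Proof.
move=> hT m n m1 n1; rewrite /cocycle; case: ifP => h.
  by rewrite fwdT // subnKC.
by rewrite bwdT // subnKC //; lia.
Qed.

Lemma Pcomm (R : realType) d (T : R -> R -> 'M[R]_d) (P : nat -> 'M[R]_d) :
  evo_alg T ->
  (forall n, (1 <= n)%N -> T n.+1%:R n%:R *m P n = P n.+1 *m T n.+1%:R n%:R) ->
  forall n k, (1 <= n)%N ->
  P (n + k)%N *m T (n + k)%:R n%:R = T (n + k)%:R n%:R *m P n.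
Proof.
move=> [Tid Tc] HP n k n1; elim: k => [|k IH].
  by rewrite addn0 Tid ?nat1 // mulmx1 mul1mx.
have h1 : (1 <= n + k)%N by lia.
rewrite addnS -(Tc _ (n+k)%:R); try (apply: nat1; lia).
by rewrite mulmxA -HP // -mulmxA IH mulmxA.
Qed.

Lemma pow_le2 (R : realType) (x a : R) : 1 <= x -> x <= 2 -> 0 <= a -> x `^ a <= 2 `^ a.
Proof.
move=> h1 h2 ha; apply: ge0_ler_powR => //; rewrite ?nnegrE; lra.
Qed.

Lemma pow_ratio (R : realType) (mn ts lam : R) : 0 < ts -> 0 < mn -> ts <= 2 * mn ->
  0 <= lam -> mn `^ (-lam) <= 2 `^ lam * ts `^ (-lam).
Proof.
move=> ts0 mn0 h l0; rewrite !powRN.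
have X0 : 0 < mn `^ lam by apply: powR_gt0.
have Y0 : 0 < ts `^ lam by apply: powR_gt0.
have Z0 : 0 < 2 `^ lam by apply: powR_gt0.
have hY : ts `^ lam <= 2 `^ lam * mn `^ lam.
  rewrite -powRM; try lra.
  by apply: ge0_ler_powR => //; rewrite nnegrE; nra.
rewrite -div1r ler_pdivrMr // mulrAC ler_pdivlMr //.
by rewrite mul1r.
Qed.

Lemma chain3 (R : realType) (a b e f c1 c2 c3 B1 B2 B3 : R) :
  a <= c1 * b -> b <= c2 * e -> e <= c3 * f ->
  0 <= c1 -> c1 <= B1 -> 0 <= c2 -> c2 <= B2 -> 0 <= c3 -> c3 <= B3 -> 0 <= f ->
  a <= B1 * B2 * B3 * f.
Proof.
move=> h1 h2 h3 p1 q1 p2 q2 p3 q3 pf.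
rewrite -!mulrA.
apply: (le_trans h1); apply: (le_trans (ler_wpM2l p1 h2)).
apply: (le_trans (ler_wpM2l p1 (ler_wpM2l p2 h3))).
apply: ler_pM => //; first by rewrite !mulr_ge0.
apply: ler_pM => //; first by rewrite !mulr_ge0.
by apply: ler_pM.
Qed.

Lemma final_bound (R : realType) (K0 X ts f : R) : 0 <= K0 -> 0 <= ts -> 0 <= f ->
  X * ts * f <= (K0 + X) * ts * f.
Proof. by move=> h1 h2 h3; rewrite ler_wpM2r // ler_wpM2r // lerDr. Qed.

Lemma growth_bound (R : realType) (K0 Kc r a0 b f : R) : 0 < K0 -> K0 <= Kc -> 1 <= r ->
  a0 <= b -> 0 <= f -> K0 * r `^ a0 * f <= Kc * r `^ b * f.
Proof.
move=> h0 h1 h2 h3 h4; rewrite ler_wpM2r //; apply: ler_pM => //; first exact: ltW.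
  exact: powR_ge0.
exact: (ler_powR h2 h3).
Qed.

Theorem proposition5p2 (R : realType) (d : nat)
  (A : R -> 'M[R]_d) (T : R -> R -> 'M[R]_d) (N : R -> 'cV[R]_d -> R) :
  {within `[1, +oo[, continuous A} ->
  evolution_family A T ->
  norm_family N ->
  (exists K a : R, [/\ 0 < K, 0 < a &
     forall t s (x : 'cV[R]_d), 1 <= s -> s <= t ->
       N t (T t s *m x) <= K * (t / s) `^ a * N s x /\
       N s (T s t *m x) <= K * (t / s) `^ a * N t x]) ->
  (cont_strong_poly_dichotomy T N <->
   disc_strong_poly_dichotomy (fun n : nat => T n.+1%:R n%:R)
                              (fun n : nat => N n%:R)).
Proof.
move=> _ [Tid Tc _ _] NF [K0 [a0 [K0p a0p Hg]]].
have hT : evo_alg T by [].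
split.
  case=> K [a [lam [P [[Kp lp la] Pp Pc Hb]]]].
  exists K, a, lam, (fun n : nat => P n%:R); split => //.
  - by move=> n n1; apply: Pp; apply: nat1.
  - move=> n n1 /=; rewrite Pc //; first by apply: nat1.
    by rewrite ler_nat.
  - move=> m n x n1 nm; rewrite !cocT //; try lia.
    by apply: Hb; [apply: nat1 | rewrite ler_nat].
case=> K [a [lam [P [[Kp lp la] Pp Pc Hb]]]].
have Nge0 : forall t x, 1 <= t -> 0 <= N t x by move=> t x t1; case: (NF t t1).
have nt1 : forall t : R, 1 <= t -> (1 <= truncn t)%N.
  by move=> t t1; rewrite truncn_ge_nat //; lra.
have ntle : forall t : R, 1 <= t -> (truncn t)%:R <= t.
  by move=> t t1; rewrite truncn_le; lra.
have ntlt : forall t : R, 1 <= t -> t < (truncn t)%:R + 1.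
  move=> t t1; have /andP[_ h] := truncn_itv (ltW (lt_le_trans ltr01 t1)).
  by rewrite natr1.
have ntmono : forall s t : R, 1 <= s -> s <= t -> (truncn s <= truncn t)%N.
  move=> s t s1 st; rewrite truncn_ge_nat; last by lra.
  by apply: (le_trans (ntle s s1)).
have PC : forall m n, (1 <= n)%N -> (n <= m)%N ->
    P m *m T m%:R n%:R = T m%:R n%:R *m P n.
  move=> m n n1 nm; rewrite -(subnKC nm); apply: Pcomm => //.
have Hb' : forall m n (x : 'cV[R]_d), (1 <= n)%N -> (n <= m)%N ->
  [/\ N m%:R (T m%:R n%:R *m (P n *m x)) <= K * (m%:R / n%:R) `^ (- lam) * N n%:R x,
      N n%:R (T n%:R m%:R *m ((1%:M - P m) *m x)) <= K * (m%:R / n%:R) `^ (- lam) * N m%:R x,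
      N m%:R (T m%:R n%:R *m x) <= K * (m%:R / n%:R) `^ a * N n%:R x &
      N n%:R (T n%:R m%:R *m x) <= K * (m%:R / n%:R) `^ a * N m%:R x].
  move=> m n x n1 nm; have := Hb m n x n1 nm; rewrite !cocT //; lia.
pose C := 2 `^ a0; pose D := 2 `^ lam.
have C0 : 0 < C by apply: powR_gt0.
have D0 : 0 < D by apply: powR_gt0.
exists (K0 + K0 * C * (K * D) * (K0 * C)), (Num.max a0 lam), lam,
  (fun t => T t (truncn t)%:R *m P (truncn t) *m T (truncn t)%:R t).
split.
- split => //; first by rewrite ltr_wpDr // !mulr_ge0 // ltW.
  by rewrite le_max lexx orbT.
- move=> t t1; rewrite /is_proj; set m := truncn t.
  have m1 := nt1 t t1; have m1r : 1 <= (m%:R : R) by apply: nat1.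
  have E : T m%:R t *m T t m%:R = 1%:M by rewrite Tc ?Tid.
  have PP := Pp m m1; rewrite /is_proj in PP.
  rewrite -!mulmxA (mulmxA (T m%:R t)) E mul1mx !mulmxA.
  by rewrite -(mulmxA (T t _) (P m)) PP.
- move=> t s s1 st /=; set m := truncn t; set n := truncn s.
  have t1 : 1 <= t by apply: le_trans st.
  have m1 := nt1 t t1; have m1r : 1 <= (m%:R : R) by apply: nat1.
  have n1 := nt1 s s1; have n1r : 1 <= (n%:R : R) by apply: nat1.
  have nm : (n <= m)%N by apply: ntmono.
  have nr : n%:R <= s by apply: ntle.
  have mr : m%:R <= t by apply: ntle.
  transitivity (T t m%:R *m (P m *m T m%:R n%:R) *m T n%:R s).
    rewrite -(mulmxA _ (T m%:R t)) Tc // -(Tc m%:R n%:R s) //.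
    by rewrite !mulmxA.
  by rewrite PC // !mulmxA Tc // Tc.
- move=> t s x s1 st /=; set m := truncn t; set n := truncn s.
  have t1 : 1 <= t by apply: le_trans st.
  have m1 := nt1 t t1; have m1r : 1 <= (m%:R : R) by apply: nat1.
  have n1 := nt1 s s1; have n1r : 1 <= (n%:R : R) by apply: nat1.
  have nm : (n <= m)%N by apply: ntmono.
  have nr : n%:R <= s by apply: ntle.
  have mr : m%:R <= t by apply: ntle.
  have tm : t < m%:R + 1 by apply: ntlt.
  have sn : s < n%:R + 1 by apply: ntlt.
  have m0 : 0 < (m%:R : R) by lra.
  have n0 : 0 < (n%:R : R) by lra.
  have s0 : 0 < s by lra.
  have tm1 : 1 <= t / m%:R by rewrite ler_pdivlMr // mul1r.
  have tm2 : t / m%:R <= 2 by rewrite ler_pdivrMr //; lra.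
  have sn1 : 1 <= s / n%:R by rewrite ler_pdivlMr // mul1r.
  have sn2 : s / n%:R <= 2 by rewrite ler_pdivrMr //; lra.
  have ts1 : 1 <= t / s by rewrite ler_pdivlMr // mul1r.
  have q0 : 0 < (m%:R / n%:R : R) by rewrite divr_gt0.
  have hts : t / s <= 2 * (m%:R / n%:R).
    rewrite ler_pdivrMr //.
    have hq : (m%:R / n%:R * n%:R : R) = m%:R by rewrite divfK // gt_eqF.
    have hsn : 0 <= s - n%:R by lra.
    have := mulr_ge0 (ltW q0) hsn.
    nra.
  have hc1 : K0 * (t / m%:R) `^ a0 <= K0 * C by rewrite ler_wpM2l ?(ltW K0p) // pow_le2 // ltW.
  have hc3 : K0 * (s / n%:R) `^ a0 <= K0 * C by rewrite ler_wpM2l ?(ltW K0p) // pow_le2 // ltW.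
  have hc2 : K * (m%:R / n%:R) `^ (- lam) <= K * (D * (t / s) `^ (- lam)).
    by rewrite ler_wpM2l ?(ltW Kp) // pow_ratio // ?ltW //; lra.
  have p1 : 0 <= K0 * (t / m%:R) `^ a0 by rewrite mulr_ge0 ?powR_ge0 // ltW.
  have p3 : 0 <= K0 * (s / n%:R) `^ a0 by rewrite mulr_ge0 ?powR_ge0 // ltW.
  have p2 : 0 <= K * (m%:R / n%:R) `^ (- lam) by rewrite mulr_ge0 ?powR_ge0 // ltW.
  have ge0ts : 0 <= (t / s) `^ (- lam) by apply: powR_ge0.
  have hK : K0 <= K0 + K0 * C * (K * D) * (K0 * C).
    by rewrite lerDl !mulr_ge0 // ltW.
  split.
  + have E : T t s *m (T s n%:R *m P n *m T n%:R s *m x)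
        = T t m%:R *m (T m%:R n%:R *m (P n *m (T n%:R s *m x))).
      by rewrite !mulmxA Tc // Tc.
    rewrite E; have [b1 _ _ _] := Hb' m n (T n%:R s *m x) n1 nm.
    apply: (le_trans (chain3 (Hg t m%:R _ m1r mr).1 b1 (Hg s n%:R x n1r nr).2
       p1 hc1 p2 hc2 p3 hc3 (Nge0 s x s1))).
    have -> : K0 * C * (K * (D * (t / s) `^ (- lam))) * (K0 * C)
       = K0 * C * (K * D) * (K0 * C) * (t / s) `^ (- lam) by ring.
    by apply: final_bound => //; [exact: ltW | exact: Nge0].
  + have E1 : 1%:M - T t m%:R *m P m *m T m%:R t
        = T t m%:R *m (1%:M - P m) *m T m%:R t.
      by rewrite mulmxBr mulmxBl mulmx1 Tc // Tid.
    have E : T s t *m ((1%:M - T t m%:R *m P m *m T m%:R t) *m x)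
        = T s n%:R *m (T n%:R m%:R *m ((1%:M - P m) *m (T m%:R t *m x))).
      by rewrite E1 !mulmxA Tc // Tc.
    rewrite E; have [_ b2 _ _] := Hb' m n (T m%:R t *m x) n1 nm.
    apply: (le_trans (chain3 (Hg s n%:R _ n1r nr).1 b2 (Hg t m%:R x m1r mr).2
       p3 hc3 p2 hc2 p1 hc1 (Nge0 t x t1))).
    have -> : K0 * C * (K * (D * (t / s) `^ (- lam))) * (K0 * C)
       = K0 * C * (K * D) * (K0 * C) * (t / s) `^ (- lam) by ring.
    by apply: final_bound => //; [exact: ltW | exact: Nge0].
  + have [g1 _] := Hg t s x s1 st; apply: (le_trans g1).
    by apply: growth_bound => //; [rewrite le_max lexx | exact: Nge0].
  + have [_ g2] := Hg t s x s1 st; apply: (le_trans g2).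
    by apply: growth_bound => //; [rewrite le_max lexx | exact: Nge0].
Qed.
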